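(* Let $f,g\in R(x)$ and $h=f+g$. Suppose $val(f)=val(g)$ and that there exists $u\in\mathbb{R}^n$ such that for all sufficiently small $\epsilon>0$ we have $val(f(p^{\epsilon u}x))< val(g(p^{\epsilon u}x))$. Then $val(h)=val(f)$ and $lc(h)=lc(f)+lc(g)$.
   Context: Let $F=F(x)$, $x=(x_1,\dots,x_n)$, be the field consisting of $0$ and all formal series $f=\sum_{t\in T} a_t(x) p^t$, where $T\subset\mathbb{R}$ is discrete and bounded from below, the $a_t(x)$ are rational functions of $x$ independent of $p$, and $a_{\min T}\neq 0$; $val(f)=\min T$ and $lc(f)=a_{val(f)}$. For $\epsilon\in\mathbb{R}^n$, $p^{\epsilon}x=(p^{\epsilon_1}x_1,\dots,p^{\epsilon_n}x_n)$. For $r\in\mathbb{C}(x)$, $\deg_\epsilon(r)=val(r(p^\epsilon x))$ and $\deg(r)=-\inf_{\epsilon\ne0}\deg_\epsilon(r)/\|\epsilon\|_\infty$. $R(x)\subset F(x)$ is the subfield of those $f=\sum_t a_tp^t$ with $\inf_{t\in T,\,t>val(f)}\deg(a_t)/(t-val(f))<\infty$; for such $f$ and $\epsilon$ small, $f(p^\epsilon x)$ is the series obtained by substituting $p^\epsilon x$ into each coefficient, expanding in $p$ and summing. *)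

(* Defs.v *)
From HB Require Import structures.
From mathcomp Require Import all_boot all_order all_algebra.
From mathcomp Require Import mpoly.
From mathcomp Require Import boolp classical_sets cardinality fsbigop reals constructive_ereal ereal.

Set Implicit Arguments.
Unset Strict Implicit.
Unset Printing Implicit Defensive.
Import Order.TTheory GRing.Theory Num.Theory.
Local Open Scope classical_set_scope.
Local Open Scope ring_scope.

Section PuiseuxLike.
Variables (R : realType) (n : nat) (K : fieldType).

Local Notation Pol := {mpoly K[n]}.
Local Notation RF := {fraction Pol}.

(* a formal series  f = sum_t a_t(x) p^t  is given by its coefficient map t |-> a_t *)
Definition series := R -> RF.

Definition is_series (f : series) : Prop :=
  (exists B : R, forall t, f t != 0 -> B <= t) /\
  (forall B : R, finite_set [set t | f t != 0 /\ t <= B]).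

Definition pval (f : series) : \bar R :=
  ereal_inf [set t%:E | t in [set t | f t != 0]].
Definition lc (f : series) : RF := f (fine (pval f)).

Definition sadd (f g : series) : series := fun t => f t + g t.

(* Cauchy product of series (finite sums for genuine series) *)
Definition smul (f g : series) : series :=
  fun s => \sum_(t \in [set t | f t != 0]) (f t * g (s - t)).

Definition dotm (e : 'I_n -> R) (m : 'X_{1..n}) : R :=
  \sum_(i < n) e i * (m i)%:R.

(* P(p^eps x) for a polynomial P, as a (finite) series *)
Definition psubst (e : 'I_n -> R) (q : Pol) : series :=
  fun s => tofrac (\sum_(m <- msupp q | dotm e m == s) (q@_m *: 'X_[m])).

(* r(p^eps x) for r = P/Q in K(x): the series S in F with S * Q(p^eps x) = P(p^eps x) *)
Definition rsubst (e : 'I_n -> R) (r : RF) : series :=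
  xget (fun _ => 0) [set S : series | is_series S /\
     exists p q : Pol, q != 0 /\ r = tofrac p / tofrac q /\ smul S (psubst e q) = psubst e p].

(* f(p^eps x): substitute in each coefficient, expand in p, and sum *)
Definition subst (e : 'I_n -> R) (f : series) : series :=
  fun s => \sum_(t \in [set t | f t != 0]) rsubst e (f t) (s - t).

Definition deg_eps (e : 'I_n -> R) (r : RF) : \bar R := pval (rsubst e r).

Definition norminf (e : 'I_n -> R) : R := \big[Num.max/0]_(i < n) `|e i|.

Definition deg (r : RF) : \bar R :=
  (- ereal_inf [set (deg_eps e r * ((norminf e)^-1)%R%:E)%E
                | e in [set e : 'I_n -> R | exists i, e i != 0%R]])%E.

Definition in_Rx (f : series) : Prop :=
  is_series f /\
  (ereal_sup [set (deg (f t) * ((t - fine (pval f))^-1)%R%:E)%E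
              | t in [set t | f t != 0%R /\ (pval f < t%:E)%E]] < +oo)%E.

End PuiseuxLike.

(* Main.v *)
Require Import Defs.
From HB Require Import structures.
From mathcomp Require Import all_boot all_order all_algebra.
From mathcomp Require Import mpoly.
From mathcomp Require Import boolp classical_sets cardinality fsbigop reals constructive_ereal ereal.
From mathcomp Require Import ring lra.
Import Order.TTheory GRing.Theory Num.Theory.
Local Open Scope ring_scope.

Module PartA.
Set Implicit Arguments.
Unset Strict Implicit.
Unset Printing Implicit Defensive.
Local Open Scope classical_set_scope.
Local Open Scope ring_scope.

Section S1.
Variables (R : realType) (n : nat) (K : fieldType).
Local Notation Pol := {mpoly K[n]}.
Local Notation RF := {fraction Pol}.
Local Notation ser := (series R n K).

Lemma pval_le (S : ser) t : S t != 0 -> (pval S <= t%:E)%E.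
Proof. by move=> h; apply: ereal_inf_lbound; exists t. Qed.

Lemma pval_ge (S : ser) b : (forall t, S t != 0 -> b <= t) -> (b%:E <= pval S)%E.
Proof. by move=> h; apply: le_ereal_inf_tmp => _ [t /h bt <-]; rewrite lee_fin. Qed.

Lemma pval_min (S : ser) s : S s != 0 -> (forall t, S t != 0 -> s <= t) -> pval S = s%:E.
Proof. by move=> h1 h2; apply/le_anti; rewrite pval_le // pval_ge. Qed.

Lemma seq_min (s : seq R) x : x \in s -> exists2 y, y \in s & forall z, z \in s -> y <= z.
Proof.
elim: s x => [//|a s IH] x; rewrite inE => /orP[/eqP _|xs].
  case: s IH => [|b s] IH.
    by exists a; rewrite ?mem_head // => z; rewrite inE => /eqP->.
  have [y ys hy] := IH b (mem_head _ _).
  case: (leP a y) => ay.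
    exists a; first exact: mem_head.
    by move=> z; rewrite inE => /orP[/eqP->//|/hy]; apply: le_trans.
  exists y; first by rewrite inE ys orbT.
  by move=> z; rewrite inE => /orP[/eqP->|/hy]//; rewrite ltW.
have [y ys hy] := IH x xs.
case: (leP a y) => ay.
  exists a; first exact: mem_head.
  by move=> z; rewrite inE => /orP[/eqP->//|/hy]; apply: le_trans.
exists y; first by rewrite inE ys orbT.
by move=> z; rewrite inE => /orP[/eqP->|/hy]//; rewrite ltW.
Qed.

Lemma finset_min (A : set R) x : finite_set A -> A x ->
  exists2 y, A y & forall z, A z -> y <= z.
Proof.
move=> fA Ax.
have := @seq_min (finmap.enum_fset (fset_set A)) x; rewrite in_fset_set // inE => /(_ Ax)[y].
rewrite in_fset_set // inE => Ay hy; exists y => // z Az; apply: hy.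
by rewrite in_fset_set // inE.
Qed.

Lemma series_min (S : ser) t0 : is_series S -> S t0 != 0 ->
  exists σ, [/\ S σ != 0, forall t, S t != 0 -> σ <= t & pval S = σ%:E].
Proof.
move=> [_ hf] h0.
have [y [Sy yt0] hy] := finset_min (hf t0) (conj h0 (lexx t0)).
have hy' : forall t, S t != 0 -> y <= t.
  move=> t St; case: (leP t t0) => tt0; first by apply: hy.
  by apply: le_trans yt0 (ltW tt0).
by exists y; split => //; apply: pval_min.
Qed.

End S1.

End PartA.
Import PartA.

Module PartB.
Set Implicit Arguments.
Unset Strict Implicit.
Unset Printing Implicit Defensive.
Local Open Scope classical_set_scope.
Local Open Scope ring_scope.

Section S2.
Variables (R : realType) (n : nat) (K : fieldType).
Local Notation Pol := {mpoly K[n]}.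
Implicit Types (e : 'I_n -> R) (p q : Pol).

Lemma dotmD e (m1 m2 : 'X_{1..n}) : dotm e (m1 + m2)%MM = dotm e m1 + dotm e m2.
Proof.
rewrite /dotm -big_split /=; apply: eq_bigr => i _.
by rewrite mnmDE natrD mulrDr.
Qed.

Lemma dotm0 (m : 'X_{1..n}) : dotm (fun _ => 0 : R) m = 0.
Proof. by rewrite /dotm big1 // => i _; rewrite mul0r. Qed.

Lemma dotmZ (c : R) e (m : 'X_{1..n}) : dotm (fun i => c * e i) m = c * dotm e m.
Proof. by rewrite /dotm mulr_sumr; apply: eq_bigr => i _; rewrite mulrA. Qed.

Lemma msuppE' p (m : 'X_{1..n}) : (m \in msupp p) = (p@_m != 0).
Proof. by rewrite mcoeff_eq0 negbK. Qed.

Definition lbw e p (a : R) := forall m, m \in msupp p -> a <= dotm e m.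
Definition sbw e p (a : R) := forall m, m \in msupp p -> a < dotm e m.
Definition vw e p (a : R) := lbw e p a /\ exists2 m, m \in msupp p & dotm e m = a.

Lemma vw_exists e p : p != 0 -> exists a, vw e p a.
Proof.
rewrite -msupp_eq0 => hne.
have [m0 m0p] : exists m0, m0 \in msupp p.
  by case E: (msupp p) hne => [//|m0 s] _; exists m0; rewrite mem_head.
have := @seq_min R [seq dotm e m | m <- msupp p] (dotm e m0).
rewrite map_f // => /(_ isT) [y /mapP[m mp ->] hy].
exists (dotm e m); split; last by exists m.
by move=> k kp; apply: hy; apply: map_f.
Qed.

Lemma vw_uniq e p a b : vw e p a -> vw e p b -> a = b.
Proof.
move=> [la [ma mpa ha]] [lb [mb mpb hb]].
have h1 := la _ mpb; have h2 := lb _ mpa.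
by apply/le_anti; rewrite hb in h1; rewrite ha in h2; rewrite h1 h2.
Qed.

Lemma lbwM e p q a b : lbw e p a -> lbw e q b -> lbw e (p * q) (a + b).
Proof.
move=> hp hq m /msuppM_le /allpairsP [[m1 m2] /= [m1p m2q ->]].
by rewrite dotmD lerD ?hp ?hq.
Qed.

Lemma sbwM e p q a b : lbw e p a -> sbw e q b -> sbw e (p * q) (a + b).
Proof.
move=> hp hq m /msuppM_le /allpairsP [[m1 m2] /= [m1p m2q ->]].
by rewrite dotmD ler_ltD ?hp ?hq.
Qed.

Lemma sbwM' e p q a b : sbw e p a -> lbw e q b -> sbw e (p * q) (a + b).
Proof. by move=> hp hq; rewrite mulrC addrC; apply: sbwM. Qed.

Definition ipart (P : pred 'X_{1..n}) p := \sum_(m <- msupp p | P m) p@_m *: 'X_[m].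

Lemma ipartE P p k : (ipart P p)@_k = if P k then p@_k else 0.
Proof.
rewrite /ipart raddf_sum /=.
under eq_bigr => m _ do rewrite mcoeffZ mcoeffX.
rewrite big_mkcond /=.
case kp: (k \in msupp p).
  rewrite (bigD1_seq k) ?msupp_uniq //= eqxx mulr1.
  rewrite big1 ?addr0; first by case: (P k).
  by move=> m /negbTE; rewrite eq_sym => ->; rewrite mulr0; case: (P m).
rewrite big1_seq; last first.
  move=> m /andP[_ mp]; case: eqP => [e1|]; rewrite ?mulr0; last by case: (P m).
  by move: kp; rewrite -e1 mp.
by move/negbT: kp; rewrite -mcoeff_eq0 => /eqP->; case: (P k).
Qed.

Lemma vwM e p q a b : vw e p a -> vw e q b -> vw e (p * q) (a + b).
Proof.
move=> [lp [mp mpp hmp]] [lq [mq mqq hmq]].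
split; first exact: lbwM.
pose ip := ipart (fun m => dotm e m == a) p; pose rp := p - ip.
pose iq := ipart (fun m => dotm e m == b) q; pose rq := q - iq.
have ipE k : ip@_k = if dotm e k == a then p@_k else 0 by rewrite ipartE.
have iqE k : iq@_k = if dotm e k == b then q@_k else 0 by rewrite ipartE.
have ip0 : ip != 0.
  apply/eqP => /(congr1 (mcoeff mp)); rewrite ipE hmp eqxx mcoeff0.
  by apply/eqP; rewrite mcoeff_eq0 negbK.
have iq0 : iq != 0.
  apply/eqP => /(congr1 (mcoeff mq)); rewrite iqE hmq eqxx mcoeff0.
  by apply/eqP; rewrite mcoeff_eq0 negbK.
have ipw k : k \in msupp ip -> dotm e k = a.
  by rewrite msuppE' ipE; case: (dotm e k =P a) => // _; rewrite eqxx.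
have iqw k : k \in msupp iq -> dotm e k = b.
  by rewrite msuppE' iqE; case: (dotm e k =P b) => // _; rewrite eqxx.
have lip : lbw e ip a by move=> k /ipw ->.
have liq : lbw e iq b by move=> k /iqw ->.
have srp : sbw e rp a.
  move=> k; rewrite msuppE' mcoeffB ipE; case: (dotm e k =P a) => [_|ne]; first by rewrite subrr eqxx.
  rewrite subr0 -msuppE' => kp; rewrite lt_neqAle lp // andbT.
  by apply/eqP => h; apply: ne; rewrite h.
have srq : sbw e rq b.
  move=> k; rewrite msuppE' mcoeffB iqE; case: (dotm e k =P b) => [_|ne]; first by rewrite subrr eqxx.
  rewrite subr0 -msuppE' => kp; rewrite lt_neqAle lq // andbT.
  by apply/eqP => h; apply: ne; rewrite h.
have : ip * iq != 0 by rewrite mulf_neq0.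
rewrite -msupp_eq0 => hne.
have [k kin] : exists k, k \in msupp (ip * iq).
  by case E: (msupp (ip * iq)) hne => [//|k s] _; exists k; rewrite mem_head.
have wk : dotm e k = a + b.
  move: kin => /msuppM_le /allpairsP [[m1 m2] /= [m1p m2q ->]].
  by rewrite dotmD ipw // iqw.
exists k => //.
have z (X : Pol) : sbw e X (a + b) -> X@_k = 0.
  by move=> h; apply/eqP; rewrite mcoeff_eq0; apply/negP => /h; rewrite wk ltxx.
have -> : p * q = ip * iq + (ip * rq + rp * iq + rp * rq).
  by rewrite /rp /rq; ring.
rewrite msuppE' mcoeffD !mcoeffD (z _ (sbwM lip srq)) (z _ (sbwM' srp liq)).
rewrite (z (rp * rq)); last by move=> m /(sbwM' srp (fun m h => ltW (srq m h))).
by rewrite !addr0 -msuppE' kin.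
Qed.

Lemma vwN e p a : vw e p a -> vw e (- p) a.
Proof.
have hm : msupp (- p) =i msupp p := perm_mem (msuppN p).
by move=> [l [m mp hm']]; split; [move=> k; rewrite hm; apply: l | exists m; rewrite ?hm].
Qed.

Lemma vwZ e p a (c : R) : 0 < c -> vw e p a -> vw (fun i => c * e i) p (c * a).
Proof.
move=> c0 [l [m mp hm]]; split; last by exists m; rewrite // dotmZ hm.
by move=> k kp; rewrite dotmZ ler_pM2l // l.
Qed.

End S2.

End PartB.
Import PartB.

Module PartC.
Set Implicit Arguments.
Unset Strict Implicit.
Unset Printing Implicit Defensive.
Local Open Scope classical_set_scope.
Local Open Scope ring_scope.

Section S3.
Variables (R : realType) (n : nat) (K : fieldType).
Local Notation Pol := {mpoly K[n]}.
Local Notation RF := {fraction Pol}.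
Local Notation ser := (series R n K).
Implicit Types (e : 'I_n -> R) (p q : Pol) (S T : ser).

Lemma psubst_nz e q s : psubst e q s != 0 <-> exists2 m, m \in msupp q & dotm e m = s.
Proof.
rewrite /psubst tofrac_eq0; split.
  move=> h; apply: contrapT => hn; move: h.
  rewrite big1_seq ?eqxx // => m /andP[/eqP ds mq]; exfalso; apply: hn; by exists m.
move=> [m mq dm]; apply/eqP => /(congr1 (mcoeff m)).
rewrite -/(ipart _ q) ipartE dm eqxx mcoeff0; apply/eqP.
by rewrite -msuppE'.
Qed.

Definition wsupp e q := undup [seq dotm e m | m <- msupp q].

Lemma psubst_supp e q s : psubst e q s != 0 -> s \in wsupp e q.
Proof.
by move/psubst_nz => [m mq <-]; rewrite mem_undup; apply: map_f.
Qed.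

Lemma smulE S T (D : seq R) s : uniq D -> (forall d, T d != 0 -> d \in D) ->
  smul S T s = \sum_(d <- D) S (s - d) * T d.
Proof.
move=> uD hT; rewrite /smul fsbig_supp.
rewrite (fsbig_fwiden [seq s - d | d <- D]).
- rewrite big_map; apply: eq_bigr => d _; congr (_ * T _); ring.
- move=> t [/= St]; rewrite /preimage /= => /eqP h.
  have /hT : T (s - t) != 0 by apply: contra h => /eqP ->; rewrite mulr0.
  move=> sD; rewrite /= ; apply/mapP; exists (s - t) => //; ring.
- rewrite map_inj_uniq // => x y /= h; apply/eqP; rewrite -subr_eq0; apply/eqP.
  have -> : x - y = (s - y) - (s - x) by ring.
  by rewrite h subrr.
- move=> t [_ /= hn]; rewrite /preimage /=.
  have [St|St] := eqVneq (S t) 0; first by rewrite St mul0r.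
  apply: contrapT => hF; apply: hn; split => //=.
Qed.

Lemma sol_val e S p q a b : is_series S -> vw e p a -> vw e q b ->
  smul S (psubst e q) = psubst e p ->
  S (a - b) != 0 /\ (forall t, S t != 0 -> a - b <= t).
Proof.
move=> iS [lp [mp mpp hmp]] [lq [mq mqq hmq]] eqS.
have Tsupp d : psubst e q d != 0 -> b <= d.
  by move/psubst_nz => [m mq0 <-]; apply: lq.
have Psupp d : psubst e p d != 0 -> a <= d.
  by move/psubst_nz => [m mp0 <-]; apply: lp.
have Pa : psubst e p a != 0 by apply/psubst_nz; exists mp.
have Tb : psubst e q b != 0 by apply/psubst_nz; exists mq.
have sE s : smul S (psubst e q) s = \sum_(d <- wsupp e q) S (s - d) * psubst e q d.
  by apply: smulE; [apply: undup_uniq | move=> d; apply: psubst_supp].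
have [t0 St0] : exists t0, S t0 != 0.
  apply: contrapT => hn; move: Pa; rewrite -eqS sE big1 ?eqxx // => d _.
  have -> : S (a - d) = 0 by apply: contra_notP hn => h; exists (a - d); apply/eqP.
  by rewrite mul0r.
have [σ [Sσ hσ _]] := series_min iS St0.
have bD : b \in wsupp e q by apply: psubst_supp.
have low s : s < σ + b -> smul S (psubst e q) s = 0.
  move=> sl; rewrite sE big1 // => d _.
  have [->|Td] := eqVneq (psubst e q d) 0; first by rewrite mulr0.
  have : S (s - d) = 0.
    apply/eqP; apply: contraTT sl => /hσ h; rewrite -leNgt.
    by have := Tsupp _ Td; move: h; lra.
  by move=> ->; rewrite mul0r.
have at0 : smul S (psubst e q) (σ + b) = S σ * psubst e q b.
  rewrite sE (bigD1_seq b) ?undup_uniq //= addrK big1 ?addr0 // => d db.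
  have [->|Td] := eqVneq (psubst e q d) 0; first by rewrite mulr0.
  have : S (σ + b - d) = 0.
    have hd : (b < d :> R) by rewrite lt_neqAle eq_sym db Tsupp.
    have [//|/hσ h] := eqVneq (S (σ + b - d)) 0; suff : False by []; lra.
  by move=> ->; rewrite mul0r.
have h1 : a <= σ + b.
  by apply: Psupp; rewrite -eqS at0 mulf_neq0.
have h2 : σ + b <= a.
  rewrite leNgt; apply/negP => /low; rewrite eqS => /eqP; apply/negP.
  exact: Pa.
have -> : a - b = σ by lra.
by split.
Qed.

End S3.

End PartC.
Import PartC.

Module PartD.
Set Implicit Arguments.
Unset Strict Implicit.
Unset Printing Implicit Defensive.
Local Open Scope classical_set_scope.
Local Open Scope ring_scope.

Section S4.
Variables (R : realType) (n : nat) (K : fieldType).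
Local Notation Pol := {mpoly K[n]}.
Local Notation RF := {fraction Pol}.
Local Notation ser := (series R n K).

Section Exist.
Variables (e : 'I_n -> R) (p q : Pol) (b : R).
Hypothesis vq : vw e q b.
Let T := psubst e q.
Let U := psubst e p.
Let D := wsupp e q.
Let D' := [seq d <- D | d != b].
Let t0 := T b.

Lemma t0_neq0 : t0 != 0.
Proof. by case: vq => _ [m mq hm]; apply/psubst_nz; exists m. Qed.

Lemma Dge d : d \in D -> b <= d.
Proof.
rewrite mem_undup => /mapP [m mq ->]; by case: vq => l _; apply: l.
Qed.

Lemma D'gt d : d \in D' -> b < d.
Proof. by rewrite mem_filter => /andP[db dD]; rewrite lt_neqAle eq_sym db Dge. Qed.

Definition Phi (S : ser) : ser := fun g =>
  (U (g + b) - \sum_(d <- D') S (g + b - d) * T d) / t0.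

Definition Sn (N : nat) : ser := iter N Phi (fun _ => 0).

Lemma Phi_ext S1 S2 g : (forall d, d \in D' -> S1 (g + b - d) = S2 (g + b - d)) ->
  Phi S1 g = Phi S2 g.
Proof.
move=> h; rewrite /Phi; congr ((_ - _) / _); apply: eq_big_seq => d dD.
by rewrite h.
Qed.

Lemma exists_m0 : exists m0, forall s, U s != 0 -> m0 + b <= s.
Proof.
have [p0|p0] := eqVneq p 0.
  by exists 0 => s; rewrite /U p0 => /psubst_nz [m]; rewrite msupp0.
have [a [l _]] := vw_exists e p0.
by exists (a - b) => s /psubst_nz [m mp <-]; rewrite subrK; apply: l.
Qed.

Variable m0 : R.
Hypothesis hm0 : forall s, U s != 0 -> m0 + b <= s.

Lemma Sn_low N g : g < m0 -> Sn N g = 0.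
Proof.
elim: N g => [//|N IH] g gm /=.
rewrite -/(Sn N) /Phi.
have -> : U (g + b) = 0.
  by apply/eqP; apply: contraTT gm => /hm0; rewrite -leNgt lerD2r.
rewrite big1_seq ?subr0 ?mul0r // => d /andP[_ dD].
rewrite IH ?mul0r //; have := D'gt dD; lra.
Qed.

Let ds := [seq d - b | d <- D'].

Definition dm : R := if ds is x :: s then foldr Num.min x s else 1.

Lemma dm_gt0 : 0 < dm.
Proof.
rewrite /dm; case E: ds => [//|x s].
have : all (fun y => 0 < y) (x :: s).
  rewrite -E; apply/allP => y /mapP [d dD ->]; rewrite subr_gt0; exact: D'gt.
move=> /= /andP[x0]; elim: s {E} => [//|y s IH] /= /andP[y0 hs].
by rewrite lt_min y0 IH.
Qed.

Lemma foldr_min_le (x : R) (s : seq R) z : z \in x :: s -> foldr Num.min x s <= z.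
Proof.
elim: s z => [|y s IH] z; first by rewrite inE => /eqP->.
rewrite /= !inE => /or3P[/eqP->|/eqP->|zs]; rewrite ge_min.
- by rewrite (IH x) ?mem_head ?orbT.
- by rewrite lexx.
- by rewrite (IH z) ?inE ?zs ?orbT.
Qed.

Lemma dm_le d : d \in D' -> dm <= d - b.
Proof.
move=> dD; have : d - b \in ds by apply: map_f.
by rewrite /dm; case: ds => [//|x s]; apply: foldr_min_le.
Qed.

Lemma Sn_stab N g : g < m0 + N%:R * dm -> Sn N.+1 g = Sn N g.
Proof.
elim: N g => [|N IH] g.
  by rewrite mul0r addr0 => h; rewrite !Sn_low.
move=> h; rewrite [LHS]/= [RHS]/=; apply: Phi_ext => d dD.
apply: IH; have := dm_le dD; move: h; rewrite -natr1 mulrDl mul1r.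
set x := N%:R * dm; have := D'gt dD; lra.
Qed.

Lemma Sn_stab2 N k g : g < m0 + N%:R * dm -> Sn (N + k) g = Sn N g.
Proof.
move=> h; elim: k => [|k IH]; first by rewrite addn0.
rewrite addnS Sn_stab ?IH //; apply: (lt_le_trans h).
rewrite lerD2l ler_pM2r ?dm_gt0 // ler_nat; exact: leq_addr.
Qed.

Definition Nof (g : R) : nat := Num.bound ((g - m0) / dm).

Lemma Nof_spec g : g < m0 + (Nof g)%:R * dm.
Proof.
have d0 := dm_gt0.
have E : g - m0 = (g - m0) / dm * dm by rewrite divfK // gt_eqF.
have N0 : 0 <= (Nof g)%:R * dm by rewrite mulr_ge0 // ltW.
rewrite /Nof in N0 *.
case: (leP 0 ((g - m0) / dm)) => h.
  have := archi_boundP h; rewrite -(ltr_pM2r d0) -E.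
  set B := _ * dm; lra.
have : (g - m0) / dm * dm < 0 by rewrite pmulr_llt0.
rewrite -E; move: N0; set B := _ * dm; lra.
Qed.

Definition Ssol : ser := fun g => Sn (Nof g) g.

Lemma SsolE M g : g < m0 + M%:R * dm -> Ssol g = Sn M g.
Proof.
move=> h; rewrite /Ssol; case: (leqP M (Nof g)) => hM.
  by rewrite -(subnKC hM) Sn_stab2.
by rewrite -(subnKC (ltnW hM)) Sn_stab2 // Nof_spec.
Qed.

Lemma Ssol_fix g : Ssol g = Phi Ssol g.
Proof.
rewrite (SsolE (M := (Nof g).+1)); last first.
  apply: (lt_le_trans (Nof_spec g)); rewrite lerD2l ler_pM2r ?dm_gt0 // ler_nat //.
rewrite /=; apply: Phi_ext => d dD; rewrite (SsolE (M := Nof g)) //.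
apply: le_lt_trans (Nof_spec g); have := D'gt dD; lra.
Qed.

Lemma Ssol_eq : smul Ssol T = U.
Proof.
apply: funext => s.
have hs : uniq D by apply: undup_uniq.
have hT : forall d, T d != 0 -> d \in D by move=> d /psubst_supp.
have -> := @smulE _ _ _ Ssol T D s hs hT.
have bD : b \in D by apply: psubst_supp; exact: t0_neq0.
rewrite (bigD1_seq b) //= -big_filter -/D'.
have -> : Ssol (s - b) = Phi Ssol (s - b) by apply: Ssol_fix.
rewrite /Phi -/t0 divfK ?t0_neq0 // subrK.
by rewrite subrK.
Qed.

Lemma Ssol_low g : g < m0 -> Ssol g = 0.
Proof. by move=> h; rewrite /Ssol Sn_low. Qed.

Let us := wsupp e p.

Definition inG (g : R) := exists2 u, u \in us &
  exists k : 'I_(size ds) -> nat, g = u - b + \sum_(i < size ds) (k i)%:R * ds`_i.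

Lemma Sn_G N g : Sn N g != 0 -> inG g.
Proof.
elim: N g => [|N IH] g; first by rewrite /= eqxx.
rewrite [Sn _ _]/= -/(Sn N) /Phi.
have [Ug|Ug] := eqVneq (U (g + b)) 0; last first.
  move=> _; exists (g + b); first exact: psubst_supp.
  exists (fun _ => 0%N); rewrite big1 ?addr0 ?addrK // => i _; by rewrite mul0r.
rewrite Ug sub0r.
have [[d dD Sd] _|hn] := pselect (exists2 d, d \in D' & Sn N (g + b - d) != 0); last first.
  rewrite big1_seq ?oppr0 ?mul0r ?eqxx // => d /andP[_ dD].
  have [->|Sd] := eqVneq (Sn N (g + b - d)) 0; first by rewrite mul0r.
  by exfalso; apply: hn; exists d.
have [u uus [k hk]] := IH _ Sd.
have dds : d - b \in ds by apply: map_f.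
pose i0 : 'I_(size ds) := Ordinal (etrans (index_mem (d - b)%R ds) dds).
exists u => //; exists (fun i => (k i + (i == i0))%N).
have -> : \sum_(i < size ds) (k i + (i == i0))%:R * ds`_i =
   \sum_(i < size ds) (k i)%:R * ds`_i + ds`_i0.
  under eq_bigr => i _ do rewrite natrD mulrDl.
  rewrite big_split /=; congr (_ + _).
  rewrite (bigD1 i0) //= eqxx mul1r big1 ?addr0 // => i /negbTE ->.
  by rewrite mul0r.
rewrite /= nth_index //; move: hk; set Sm := \sum_(i < size ds) _; lra.
Qed.

Lemma ds_ge (i : nat) : (i < size ds)%N -> dm <= ds`_i.
Proof.
move=> hi; have := mem_nth 0 hi => /mapP [d dD ->]; exact: dm_le.
Qed.

Lemma Ssol_series : is_series Ssol.
Proof.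
split.
  exists m0 => t St; rewrite leNgt; apply/negP => /Ssol_low h.
  by move: St; rewrite h eqxx.
move=> B0.
pose x := (B0 - m0) / dm.
pose L := Num.bound x.
pose f (y : 'I_(size us) * {ffun 'I_(size ds) -> 'I_L}) : R :=
  us`_(y.1) - b + \sum_(i < size ds) ((y.2 i : nat))%:R * ds`_i.
apply: (sub_finite_set _ (finite_image f (@finite_finset _ setT))).
move=> t [St tB].
have [u uus [k hk]] := Sn_G St.
have ub : m0 + b <= u.
  apply: hm0; move: uus; rewrite mem_undup => /mapP [m mp ->].
  by apply/psubst_nz; exists m.
have d0 := dm_gt0.
have kx i : (k i)%:R <= x.
  have hsum : (k i)%:R * ds`_i <= \sum_(j < size ds) (k j)%:R * ds`_j.
    rewrite (bigD1 i) //= lerDl sumr_ge0 // => j _.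
    by rewrite mulr_ge0 // (le_trans (ltW d0)) ?ds_ge.
  have h2 : (k i)%:R * dm <= (k i)%:R * ds`_i by rewrite ler_wpM2l // ds_ge.
  rewrite /x ler_pdivlMr //.
  move: hsum h2 hk tB ub; set Sm := \sum_(j < size ds) _.
  set P1 := _ * ds`_i; set P2 := _ * dm; lra.
have kL i : (k i < L)%N.
  rewrite -(ltr_nat R); apply: (le_lt_trans (kx i)).
  by apply: archi_boundP; apply: le_trans (kx i).
pose kk : {ffun 'I_(size ds) -> 'I_L} := [ffun i => Ordinal (kL i)].
have ju : (index u us < size us)%N by rewrite index_mem.
exists (Ordinal ju, kk) => //.
rewrite /f /= nth_index // hk; congr (_ + _); apply: eq_bigr => i _.
by rewrite ffunE.
Qed.

End Exist.

Lemma sol_exists e p q : q != 0 ->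
  exists S : ser, is_series S /\ smul S (psubst e q) = psubst e p.
Proof.
move=> q0; have [b vq] := vw_exists e q0.
have [m0 hm0] : exists m0, forall s, psubst e p s != 0 -> m0 + b <= s.
  exact: exists_m0.
exists (Ssol e p q b m0); split; [exact: (@Ssol_series e p q b vq m0 hm0) | exact: (@Ssol_eq e p q b vq m0 hm0)].
Qed.
End S4.

End PartD.
Import PartD.

Module PartE.
Set Implicit Arguments.
Unset Strict Implicit.
Unset Printing Implicit Defensive.
Local Open Scope classical_set_scope.
Local Open Scope ring_scope.

Lemma frac_rep (R : idomainType) (a : {fraction R}) :
  exists p q : R, q != 0 /\ a = (tofrac p) / (tofrac q).
Proof.
elim/quotW: a => x; exists (x.1), (x.2); split; first exact: denom_ratioP.
rewrite /GRing.inv /GRing.mul /=.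
rewrite !piE.
apply/eqmodP; rewrite /= FracField.equivfE.
rewrite /FracField.mulf /FracField.invf !numden_Ratio ?oner_eq0 ?mulf_neq0 ?denom_ratioP //.
rewrite mul1r mulr1 mulrC.
- exact: eqxx.
all: exact: oner_neq0.
Qed.

End PartE.
Import PartE.

Module PartF.
Set Implicit Arguments.
Unset Strict Implicit.
Unset Printing Implicit Defensive.
Local Open Scope classical_set_scope.
Local Open Scope ring_scope.

Section S5.
Variables (R : realType) (n : nat) (K : fieldType).
Local Notation Pol := {mpoly K[n]}.
Local Notation RF := {fraction Pol}.
Local Notation ser := (series R n K).

Lemma norminf_ge0 (e : 'I_n -> R) : 0 <= norminf e.
Proof. by rewrite /norminf; apply: (big_ind (fun x => 0 <= x)) => // x y; rewrite le_max => ->. Qed.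

Lemma norminf_ge (e : 'I_n -> R) i : `|e i| <= norminf e.
Proof. by rewrite /norminf (bigD1 i) //= le_max lexx. Qed.

Lemma norminfZ (c : R) (e : 'I_n -> R) : 0 <= c ->
  norminf (fun i => c * e i) = c * norminf e.
Proof.
move=> c0; rewrite /norminf.
apply: (big_ind2 (fun x y => x = c * y)); first by rewrite mulr0.
  by move=> x1 y1 x2 y2 -> ->; rewrite maxr_pMr.
by move=> i _; rewrite normrM ger0_norm.
Qed.

Definition solset (e : 'I_n -> R) (r : RF) : set ser := [set S : ser | is_series S /\
     exists p q : Pol, q != 0 /\ r = tofrac p / tofrac q /\ smul S (psubst e q) = psubst e p].

Lemma rsubstE (e : 'I_n -> R) (r : RF) : rsubst e r = xget (fun _ => 0) (solset e r).
Proof. by []. Qed.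

Lemma rsubst_cases (e : 'I_n -> R) (r : RF) : rsubst e r = (fun _ => 0) \/ solset e r (rsubst e r).
Proof.
rewrite rsubstE; have [[S hS]|hn] := pselect (exists S, solset e r S).
  by right; apply: xgetPex; exists S.
by left; apply: xgetPN => S hS; apply: hn; exists S.
Qed.

Lemma tofrac_rel (p q P Q : Pol) : q != 0 -> Q != 0 ->
  tofrac p / tofrac q = tofrac P / tofrac Q :> RF -> p * Q = P * q.
Proof.
move=> q0 Q0 h.
have q0' : tofrac q != 0 :> RF by rewrite tofrac_eq0.
have Q0' : tofrac Q != 0 :> RF by rewrite tofrac_eq0.
have h2 : tofrac (p * Q) = tofrac (P * q) :> RF.
  rewrite !tofracM.
  have := congr1 (fun z => z * tofrac q * tofrac Q) h.
  move=> /= h3.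
  rewrite (divfK q0') mulrAC (divfK Q0') in h3.
  by rewrite h3 mulrC.
by apply/eqP; rewrite -(tofrac_eq (R := Pol)) h2.
Qed.

Lemma rsubst_val (e : 'I_n -> R) (a : RF) (P0 Q0 : Pol) (a1 b1 : R) : a != 0 -> Q0 != 0 ->
  a = tofrac P0 / tofrac Q0 -> vw e P0 a1 -> vw e Q0 b1 ->
  rsubst e a (a1 - b1) != 0 /\ forall t, rsubst e a t != 0 -> a1 - b1 <= t.
Proof.
move=> a0 Q00 aE v1 v2.
have [S [iS SE]] := sol_exists e P0 Q00.
have : solset e a (rsubst e a).
  by rewrite rsubstE; apply: xgetPex; exists S; split => //; exists P0, Q0.
move=> [iX [p [q [q0 [aE2 XE]]]]].
have p0 : p != 0.
  by apply: contra a0 => /eqP p0; rewrite aE2 p0 tofrac0 mul0r.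
have [al va] := vw_exists e p0.
have [be vb] := vw_exists e q0.
have h := sol_val iX va vb XE.
have eq1 := tofrac_rel q0 Q00 (etrans (esym aE2) aE).
have w1 := vwM va v2; have w2 := vwM v1 vb.
rewrite eq1 in w1; have := vw_uniq w1 w2 => h2.
have -> : a1 - b1 = al - be by lra.
exact: h.
Qed.

Lemma rsubst_zero_e (e : 'I_n -> R) (r : RF) (s : R) : r != 0 -> (forall i, e i = 0) ->
  rsubst e r s != 0 -> 0 <= s.
Proof.
move=> r0 e0.
have de m : dotm e m = 0 by rewrite /dotm big1 // => i _; rewrite e0 mul0r.
case: (rsubst_cases e r) => [->|[iX [p [q [q0 [rE XE]]]]]]; first by rewrite eqxx.
have p0 : p != 0 by apply: contra r0 => /eqP p0; rewrite rE p0 tofrac0 mul0r.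
have [al va] := vw_exists e p0.
have [be vb] := vw_exists e q0.
have [h1 h2] := sol_val iX va vb XE.
have al0 : al = 0 by case: va => _ [m _ <-].
have be0 : be = 0 by case: vb => _ [m _ <-].
by move=> /h2; rewrite al0 be0 subr0.
Qed.

End S5.

End PartF.
Import PartF.

Module PartG.
Set Implicit Arguments.
Unset Strict Implicit.
Unset Printing Implicit Defensive.
Local Open Scope classical_set_scope.
Local Open Scope ring_scope.

Section S6.
Variables (R : realType) (n : nat) (K : fieldType).
Local Notation Pol := {mpoly K[n]}.
Local Notation RF := {fraction Pol}.
Local Notation ser := (series R n K).

Lemma tail_bound (f : ser) (v : R) : in_Rx f -> pval f = v%:E ->
  exists M : R, 0 <= M /\ forall t, f t != 0 -> v < t -> forall (e : 'I_n -> R) (s : R),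
    rsubst e (f t) s != 0 -> - (M * (t - v) * norminf e) <= s.
Proof.
move=> [_ hsup] hv; move: hsup; rewrite hv /=.
set SS := (X in ereal_sup X) => hsup.
have [M [M0 hM]] : exists M : R, 0 <= M /\ forall y, SS y -> (y <= M%:E)%E.
  have ub := @ereal_sup_ubound R SS.
  case E: (ereal_sup SS) ub hsup => [r| |] ub hsup.
  - exists (Num.max r 0); split; first by rewrite le_max lexx orbT.
    move=> y /ub h; apply: le_trans h _; rewrite lee_fin le_max lexx //.
  - by rewrite ltxx in hsup.
  - by exists 0; split => // y /ub h; apply: le_trans h (leNye _).
exists M; split => // t ft vt e s hs.
have w0 : 0 < t - v by rewrite subr_gt0.
have [[i ei]|hn] := pselect (exists i, e i != 0); last first.
  have e0 i : e i = 0 by apply/eqP; apply: contrapT => h; apply: hn; exists i; apply/negP.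
  have := rsubst_zero_e ft e0 hs.
  have : 0 <= M * (t - v) * norminf e by rewrite !mulr_ge0 ?norminf_ge0 // ltW.
  lra.
have k0 : 0 < norminf e.
  by apply: lt_le_trans (norminf_ge e i); rewrite normr_gt0.
have hdeg : (deg R (f t) * ((t - v)^-1)%:E <= M%:E)%E.
  by apply: hM; exists t => //; split => //; rewrite hv lte_fin.
have hI : (- (s / norminf e)%:E <= deg R (f t))%E.
  rewrite /deg leeN2.
  apply: (@le_trans _ _ (deg_eps e (f t) * ((norminf e)^-1)%:E)%E).
    by apply: ereal_inf_lbound; exists e => //; exists i.
  rewrite EFinM; apply: lee_wpmul2r; first by rewrite lee_fin invr_ge0 ltW.
  exact: pval_le.
have h2 : ((- (s / norminf e)) * (t - v)^-1 <= M)%R.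
  rewrite -lee_fin EFinM; apply: le_trans hdeg.
  by apply: lee_wpmul2r; [rewrite lee_fin invr_ge0 ltW | rewrite EFinN].
move: h2; rewrite ler_pdivrMr // => h2.
have h3 : - s <= M * (t - v) * norminf e.
  by rewrite -ler_pdivrMr // mulNr.
lra.
Qed.

End S6.

End PartG.
Import PartG.

Module PartH.
Set Implicit Arguments.
Unset Strict Implicit.
Unset Printing Implicit Defensive.
Local Open Scope classical_set_scope.
Local Open Scope ring_scope.

Section S7.
Variables (R : realType) (n : nat) (K : fieldType).
Local Notation Pol := {mpoly K[n]}.
Local Notation RF := {fraction Pol}.
Local Notation ser := (series R n K).

Lemma choose_eps (d M k al c : R) : 0 < d -> 0 <= M -> 0 <= k -> 0 < c ->
  exists eps : R, [/\ 0 < eps, eps < d, eps * (M * k) <= 1 / 2 & eps * `|al| < c].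
Proof.
move=> d0 M0 k0 c0.
have mk0 : 0 <= M * k by rewrite mulr_ge0.
have a0 : 0 <= `|al| by [].
pose e1 := d / 2; pose e2 := 1 / (2 * (M * k + 1)); pose e3 := c / (2 * (`|al| + 1)).
have e10 : 0 < e1 by rewrite divr_gt0.
have e20 : 0 < e2 by rewrite divr_gt0 // mulr_gt0 // ltr_wpDl.
have e30 : 0 < e3 by rewrite divr_gt0 // mulr_gt0 // ltr_wpDl.
exists (Num.min e1 (Num.min e2 e3)).
have h1 : Num.min e1 (Num.min e2 e3) <= e1 by rewrite ge_min lexx.
have h2 : Num.min e1 (Num.min e2 e3) <= e2 by rewrite ge_min ge_min lexx orbT.
have h3 : Num.min e1 (Num.min e2 e3) <= e3 by rewrite ge_min ge_min lexx !orbT.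
set eps := Num.min _ _ in h1 h2 h3 *.
have ep0 : 0 < eps by rewrite /eps lt_min e10 lt_min e20 e30.
split => //.
- by apply: le_lt_trans h1 _; rewrite /e1; lra.
- have E2 : e2 * (M * k) + e2 = 1 / 2.
    by rewrite /e2; field; rewrite gt_eqF // ltr_wpDl.
  have h4 : eps * (M * k) <= e2 * (M * k) by rewrite ler_wpM2r.
  move: E2 h4; set P := M * k; set Q := e2 * P; set Q' := eps * P; lra.
- have E3 : e3 * `|al| + e3 = c / 2.
    by rewrite /e3; field; rewrite gt_eqF // ltr_wpDl.
  have h4 : eps * `|al| <= e3 * `|al| by rewrite ler_wpM2r.
  move: E3 h4; set P := `|al|; set Q := e3 * P; set Q' := eps * P; lra.
Qed.

Lemma discrete (f : ser) (v : R) : is_series f ->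
  exists c1 : R, 0 < c1 /\ forall t, f t != 0 -> v < t -> v + c1 <= t.
Proof.
move=> [_ hf].
have [[t0 [[ft0 vt0] t0v]]|hn] := pselect (exists t0, (f t0 != 0 /\ v < t0) /\ t0 <= v + 1).
  have fA : finite_set [set t | (f t != 0 /\ v < t) /\ t <= v + 1].
    apply: sub_finite_set (hf (v + 1)) => t [[ft _] tv]; by split.
  have [y [[fy vy] yv] hy] := finset_min fA (conj (conj ft0 vt0) t0v).
  exists (y - v); split; first by rewrite subr_gt0.
  move=> t ft vt; case: (leP t (v + 1)) => tv.
    by have := hy t (conj (conj ft vt) tv); lra.
  lra.
exists 1; split => // t ft vt; apply: contrapT => h; apply: hn; exists t.
split => //; lra.
Qed.

Lemma subst_single (e : 'I_n -> R) (f : ser) (v s : R) : f v != 0 ->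
  (forall t, f t != 0 -> t != v -> rsubst e (f t) (s - t) = 0) ->
  subst e f s = rsubst e (f v) (s - v).
Proof.
move=> fv h.
rewrite /subst.
rewrite -(@fsbig_widen _ _ _ _ [set v]).
- exact: fsbig_set1.
- by move=> t /= ->.
- move=> t [/= ft tv]; rewrite /preimage /=; apply: h => //.
  by apply/eqP => tv'; apply: tv.
Qed.
Lemma pval0 (S : ser) : (forall t, S t = 0) -> pval S = +oo%E.
Proof.
move=> h; rewrite /pval (_ : [set _ | _ in _] = set0) ?ereal_inf0 //.
by apply/seteqP; split => // x [t /=]; rewrite h eqxx.
Qed.

Lemma tail_vanish (h : ser) (e : 'I_n -> R) (v c1 Mx eps k M : R) :
  0 <= Mx -> Mx <= M -> 0 < eps -> 0 <= k -> eps * (M * k) <= 1 / 2 ->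
  norminf e = eps * k ->
  (forall t, h t != 0 -> v <= t) -> (forall t, h t != 0 -> v < t -> v + c1 <= t) ->
  (forall t, h t != 0 -> v < t -> forall (e0 : 'I_n -> R) (s : R),
      rsubst e0 (h t) s != 0 -> - (Mx * (t - v) * norminf e0) <= s) ->
  forall s, s < v + c1 / 2 -> forall t, h t != 0 -> t != v -> rsubst e (h t) (s - t) = 0.
Proof.
move=> Mx0 MxM ep0 k0 epM ne hmn hc hM s sv t ht tv.
have vt : v < t by rewrite lt_neqAle eq_sym tv hmn.
have ct := hc t ht vt.
apply/eqP; apply: contraTT sv => /(hM t ht vt) hb; rewrite -leNgt.
rewrite ne in hb.
have z1 : eps * (Mx * k) <= 1 / 2.
  apply: le_trans epM; apply: ler_wpM2l; [exact: ltW | exact: ler_wpM2r].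
have z2 : eps * (Mx * k) * (t - v) <= 1 / 2 * (t - v).
  by apply: ler_wpM2r; [rewrite subr_ge0 ltW | exact: z1].
have z3 : Mx * (t - v) * (eps * k) = eps * (Mx * k) * (t - v) by ring.
move: hb z2; rewrite z3; set Z := eps * (Mx * k) * (t - v); lra.
Qed.

Lemma pval_shift (h Z : ser) (v c sg : R) : sg < c ->
  (forall s, s < v + c -> h s = Z (s - v)) ->
  Z sg != 0 -> (forall t, Z t != 0 -> sg <= t) -> pval h = (v + sg)%:E.
Proof.
move=> sgc hE Z0 Zm; apply: pval_min.
  rewrite hE; last by lra.
  by rewrite addrAC subrr add0r.
move=> s hs0; case: (ltP s (v + c)) => sv.
  by move: hs0; rewrite hE // => /Zm; lra.
lra.
Qed.

End S7.

End PartH.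
Import PartH.

Unset Implicit Arguments.

Theorem corollary2p4 (R : realType) (n : nat) (K : fieldType)
    (f g : series R n K) :
  in_Rx f -> in_Rx g ->
  pval f = pval g ->
  (exists u : 'I_n -> R, exists d : R, 0 < d /\
     forall eps : R, 0 < eps -> eps < d ->
       (pval (subst (fun i => (eps * u i)%R) f) < pval (subst (fun i => (eps * u i)%R) g))%E) ->
  pval (sadd f g) = pval f /\ lc (sadd f g) = lc f + lc g.
Proof.
move=> iF iG hfg [u [d [d0 hu]]].
suff H : pval (sadd f g) = pval f.
  split; first exact: H.
  rewrite /lc H -hfg /sadd; exact: erefl.
have [[t0 ft0]|hz] := pselect (exists t0, f t0 != 0); last first.
  have f0 t : f t = 0 by apply/eqP; apply: contrapT => h; apply: hz; exists t; apply/negP.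
  have pf : pval f = +oo%E by apply: pval0.
  have g0 t : g t = 0.
    apply/eqP; apply: contrapT => /negP /pval_le; rewrite -hfg pf.
    by rewrite leye_eq.
  rewrite pf; apply: pval0 => t; rewrite /sadd f0 g0 addr0; exact: erefl.
have [v [fv fmin pfv]] := series_min iF.1 ft0.
have pgv : pval g = v%:E by rewrite -hfg; exact: pfv.
have [gv gmin] : g v != 0 /\ forall t, g t != 0 -> v <= t.
  have [t1 gt1] : exists t1, g t1 != 0.
    apply: contrapT => hn.
    have : pval g = +oo%E.
      apply: pval0 => t.
      by apply/eqP; apply: contrapT => h; apply: hn; exists t; apply/negP.
    by rewrite pgv.
  have [w [gw gwm pgw]] := series_min iG.1 gt1.
  move: pgw; rewrite pgv => -[wv]; rewrite wv; split; [exact: gw | exact: gwm].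
have hmin t : t < v -> sadd f g t = 0.
  move=> tv; rewrite /sadd.
  have -> : f t = 0 by apply/eqP; apply: contraTT tv => /fmin; rewrite -leNgt.
  have -> : g t = 0 by apply/eqP; apply: contraTT tv => /gmin; rewrite -leNgt.
  exact: addr0.
have [hs|hs] := eqVneq (f v + g v) 0; last first.
  rewrite pfv; apply: pval_min; first exact: hs.
  move=> t; rewrite leNgt; apply: contraNN => /hmin ->; exact: eqxx.
exfalso.
have gva : g v = - f v by rewrite -[LHS](addKr (f v)) hs addr0.
have [P0 [Q0 [Q00 aE]]] := @frac_rep _ (f v).
have P00 : P0 != 0.
  by apply: contra fv => /eqP P0z; rewrite aE P0z tofrac0 mul0r.
have [al1 va1] := vw_exists u P00.
have [be1 vb1] := vw_exists u Q00.
have [Mf [Mf0 hMf]] := tail_bound iF pfv.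
have [Mg [Mg0 hMg]] := tail_bound iG pgv.
have [cf [cf0 hcf]] := discrete v iF.1.
have [cg [cg0 hcg]] := discrete v iG.1.
pose c1 := Num.min cf cg.
have c10 : 0 < c1 by rewrite lt_min cf0 cg0.
have c1f : c1 <= cf by rewrite ge_min lexx.
have c1g : c1 <= cg by rewrite ge_min lexx orbT.
pose M := Mf + Mg.
have M0 : 0 <= M by rewrite addr_ge0.
pose k := norminf u.
have k0 : 0 <= k := norminf_ge0 u.
have c20 : 0 < c1 / 2 by rewrite divr_gt0.
have [eps [ep0 epd epM epa]] := choose_eps (al1 - be1) d0 M0 k0 c20.
pose e := fun i => eps * u i.
have ne : norminf e = eps * k by apply: norminfZ; apply: ltW.
have hlt := hu eps ep0 epd.
have gE : g v = tofrac (- P0) / tofrac Q0 by rewrite gva aE tofracN mulNr.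
have [X0 Xm] := rsubst_val fv Q00 aE (vwZ ep0 va1) (vwZ ep0 vb1).
have [Y0 Ym] := rsubst_val gv Q00 gE (vwN (vwZ ep0 va1)) (vwZ ep0 vb1).
set sg := eps * al1 - eps * be1 in X0 Xm Y0 Ym.
have hsg : sg < c1 / 2.
  apply: le_lt_trans epa; rewrite /sg -mulrBr; apply: ler_wpM2l; [exact: ltW | exact: ler_norm].
have MfM : Mf <= M by rewrite /M lerDl.
have MgM : Mg <= M by rewrite /M lerDr.
have hcf' t : f t != 0 -> v < t -> v + c1 <= t.
  by move=> ft vt; apply: le_trans (hcf t ft vt); rewrite lerD2l.
have hcg' t : g t != 0 -> v < t -> v + c1 <= t.
  by move=> gt vt; apply: le_trans (hcg t gt vt); rewrite lerD2l.
have sf s : s < v + c1 / 2 -> subst e f s = rsubst e (f v) (s - v).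
  move=> sv; apply: subst_single; first exact: fv.
  exact: (tail_vanish Mf0 MfM ep0 k0 epM ne fmin hcf' hMf sv).
have sgE s : s < v + c1 / 2 -> subst e g s = rsubst e (g v) (s - v).
  move=> sv; apply: subst_single; first exact: gv.
  exact: (tail_vanish Mg0 MgM ep0 k0 epM ne gmin hcg' hMg sv).
have p1 : pval (subst e f) = (v + sg)%:E by apply: (pval_shift hsg sf X0 Xm).
have p2 : pval (subst e g) = (v + sg)%:E by apply: (pval_shift hsg sgE Y0 Ym).
move: hlt; rewrite -/e p1 p2 ltxx; exact: notF.
Qed.
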